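(* Assume Hypothesis 1 (stated in the context). If $\dfrac{|C|}{|C_{\max}|}<\dfrac{m(m-1)}{\delta(\delta-1)}$, then $\delta_{\max}\le 2\delta$.
   Context: $H(m,2)$: vertex set $\mathbb F_2^m$, coordinates indexed by a set $M$, $|M|=m$; $d$ Hamming distance. For a code $C$: minimum distance $\delta$, covering radius $\rho=\max_\alpha d(\alpha,C)$, $C_i=\{\alpha:d(\alpha,C)=i\}$. $\mathrm{Aut}(H(m,2))=B\rtimes L$, $B\cong\mathbb Z_2^m$ translations, $L\cong\mathrm{Sym}(M)$; $\mathrm{Aut}(C)$ is the setwise stabiliser of $C$. $C$ is completely transitive if $\mathrm{Aut}(C)$ is transitive on each of $C,C_1,\dots,C_\rho$. For a linear code $D$, $T_D$ is the group of translations by elements of $D$. For $C\ni\mathbf 0$, the maximal linear subcode $C_{\max}$ is the largest linear subcode $D\subseteq C$ with $T_D\le\mathrm{Aut}(C)$. Hypothesis 1: $C$ is a completely transitive code in $H(m,2)$ with $\mathbf 0\in C$ and minimum distance $\delta\ge5$; $X=\mathrm{Aut}(C)$; $C_{\max}$ is the maximal linear subcode with minimum distance $\delta_{\max}$; $X_{\max}$ is the setwise stabiliser of $C_{\max}$ in $X$; $2\le\dim C_{\max}\le m-2$. *)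

(* Defs.v *)
From HB Require Import structures.
From mathcomp Require Import all_boot all_order all_algebra all_fingroup.
Set Implicit Arguments. Unset Strict Implicit. Unset Printing Implicit Defensive.
Import GRing.Theory.
Local Open Scope ring_scope.

(* Vertices of H(m,2): row vectors 'rV['F_2]_m; coordinate set M = 'I_m. *)
Notation vert m := 'rV['F_2]_m.

Definition hdist (m : nat) (x y : vert m) : nat :=
  #|[set i : 'I_m | x 0 i != y 0 i]|.

Definition dist_to (m : nat) (C : {set vert m}) (a : vert m) (i : nat) : Prop :=
  (exists2 c, c \in C & hdist a c = i) /\ (forall c, c \in C -> (i <= hdist a c)%N).

Definition min_dist (m : nat) (C : {set vert m}) (delta : nat) : Prop :=
  (exists c1, exists c2, [/\ c1 \in C, c2 \in C, c1 != c2 & hdist c1 c2 = delta]) /\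
  (forall c1 c2, c1 \in C -> c2 \in C -> c1 != c2 -> (delta <= hdist c1 c2)%N).

(* Aut(H(m,2)) = B ⋊ L: the element (b, s) acts by coordinate permutation s
   followed by translation by b. *)
Definition aut_act (m : nat) (g : vert m * 'S_m) (x : vert m) : vert m :=
  col_perm g.2 x + g.1.

Definition in_AutC (m : nat) (C : {set vert m}) (g : vert m * 'S_m) : bool :=
  [set aut_act g x | x in C] == C.

(* completely transitive: Aut(C) transitive on each C_i (C_0 = C);
   C_i is empty for i > rho, so quantifying over all i is equivalent. *)
Definition completely_transitive (m : nat) (C : {set vert m}) : Prop :=
  forall (i : nat) (a b : vert m), dist_to C a i -> dist_to C b i ->
    exists2 g, in_AutC C g & aut_act g a = b.

Definition transl_in_Aut (m : nat) (C : {set vert m}) (D : {vspace vert m}) : Prop :=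
  forall d, d \in D -> in_AutC C (d, 1%g).

Definition admissible_linear_subcode (m : nat) (C : {set vert m})
    (D : {vspace vert m}) : Prop :=
  (forall x, x \in D -> x \in C) /\ transl_in_Aut C D.

Definition is_max_linear_subcode (m : nat) (C : {set vert m})
    (Cmax : {vspace vert m}) : Prop :=
  admissible_linear_subcode C Cmax /\
  (forall D : {vspace vert m}, admissible_linear_subcode C D -> (D <= Cmax)%VS).

Definition vs_set (m : nat) (D : {vspace vert m}) : {set vert m} :=
  [set x | x \in D].

(* Main.v *)
Require Import Defs.
From HB Require Import structures.
From mathcomp Require Import all_boot all_order all_algebra all_fingroup.
From mathcomp Require Import zify.
Set Implicit Arguments. Unset Strict Implicit. Unset Printing Implicit Defensive.
Import GRing.Theory Num.Theory.
Local Open Scope ring_scope.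

Lemma card_bigcup_le (I T : finType) (P : pred I) (F : I -> {set T}) :
  (#|\bigcup_(i | P i) F i| <= \sum_(i | P i) #|F i|)%N.
Proof.
elim/big_rec2: _ => [|i n S _ IH]; first by rewrite cards0.
by rewrite (leq_trans (leq_card_setU _ _)) // leq_add2l.
Qed.

Definition offdiag (T : finType) (A : {set T}) : {set T * T} :=
  [set p in setX A A | p.1 != p.2].

Lemma card_offdiag (T : finType) (A : {set T}) :
  #|offdiag A| = (#|A| * (#|A| - 1))%N.
Proof.
have := cardsID [set p : T * T | p.1 == p.2] (setX A A).
have -> : setX A A :&: [set p : T * T | p.1 == p.2] = [set (x, x) | x in A].
  apply/setP => -[x y]; rewrite !inE /=; apply/idP/imsetP.
    by case/andP => /andP [xA _] /eqP <-; exists x.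
  by case=> z zA [-> ->]; rewrite zA eqxx.
rewrite card_imset; last by move=> x y [].
have -> : setX A A :\: [set p : T * T | p.1 == p.2] = offdiag A.
  by apply/setP => -[x y]; rewrite !inE /= andbC.
rewrite cardsX mulnBr muln1 => <-; by rewrite addKn.
Qed.

Section S.
Variable m : nat.
Implicit Types x y z : 'rV['F_2]_m.

Definition supp x := [set t | x 0 t != 0].

Lemma hdist0 x : hdist x 0 = #|supp x|.
Proof. by apply: eq_card => i; rewrite !inE mxE. Qed.

Lemma hdistC x y : hdist x y = hdist y x.
Proof. by apply: eq_card => i; rewrite !inE eq_sym. Qed.

Lemma hdistxx x : hdist x x = 0%N.
Proof. by apply/eqP; rewrite cards_eq0; apply/eqP/setP => i; rewrite !inE eqxx. Qed.

Lemma hdist_tri x y z : (hdist x z <= hdist x y + hdist y z)%N.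
Proof.
rewrite /hdist; apply: leq_trans (leq_card_setU _ _); apply: subset_leq_card.
apply/subsetP => i; rewrite !inE; case: (eqVneq (x 0 i) (y 0 i)) => [->|] //=.
Qed.

Lemma act_entry (g : 'rV['F_2]_m * 'S_m) x t :
  aut_act g x 0 t = x 0 (g.2 t) + g.1 0 t.
Proof. by rewrite /aut_act !mxE. Qed.

Lemma hdist_act g x y : hdist (aut_act g x) (aut_act g y) = hdist x y.
Proof.
rewrite /hdist.
have -> : [set i | aut_act g x 0 i != aut_act g y 0 i] =
   g.2 @^-1: [set i | x 0 i != y 0 i].
  by apply/setP => i; rewrite !inE !act_entry (inj_eq (@addIr _ _)).
by rewrite card_preimset //; exact: perm_inj.
Qed.

Lemma aut_mem (C : {set 'rV['F_2]_m}) g x :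
  in_AutC C g -> x \in C -> aut_act g x \in C.
Proof. by move=> /eqP H Hx; rewrite -H; exact: imset_f. Qed.

End S.

Definition rowij m (i j : 'I_m) : 'rV['F_2]_m :=
  \row_t (if (t == i) || (t == j) then 1 else 0).

Lemma rowij_nz m (i j t : 'I_m) : (rowij i j 0 t != 0) = (t == i) || (t == j).
Proof. by rewrite mxE; case: ifP; rewrite ?eqxx ?oner_eq0. Qed.

Lemma rowij_wt m (i j : 'I_m) : i != j -> hdist (rowij i j) 0 = 2%N.
Proof.
move=> ij; rewrite hdist0 (_ : supp _ = [set i; j]) ?cards2 ?ij //.
by apply/setP => t; rewrite !inE rowij_nz.
Qed.

Lemma vs_setE m (D : {vspace 'rV['F_2]_m}) x : (x \in vs_set D) = (x \in D).
Proof. by rewrite inE. Qed.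

Theorem lemma2p8 (m : nat) (C : {set 'rV['F_2]_m}) (delta : nat)
    (Cmax : {vspace 'rV['F_2]_m}) (delta_max : nat) :
  completely_transitive C ->
  (0 : 'rV['F_2]_m)%R \in C ->
  min_dist C delta -> (5 <= delta)%N ->
  is_max_linear_subcode C Cmax ->
  min_dist (vs_set Cmax) delta_max ->
  (2 <= \dim Cmax <= m - 2)%N ->
  ((#|C|%:R / #|vs_set Cmax|%:R : rat) <
     (m * (m - 1))%:R / (delta * (delta - 1))%:R)%R ->
  (delta_max <= 2 * delta)%N.
Proof.
move=> CT C0 [[c1 [c2 [c1C c2C c12 d12]]] Hmin] d5 [[CmC TA] _] [_ Hmax] _ Hrat.
rewrite leqNgt; apply/negP => Hlt.
have [w0 w0C w0d] : exists2 w0, w0 \in C & hdist w0 0 = delta.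
  have D1 : dist_to C c1 0 by split => //; exists c1; rewrite // hdistxx.
  have D0 : dist_to C 0 0 by split => //; exists 0; rewrite // hdistxx.
  have [g gA gc1] := CT 0%N c1 0 D1 D0.
  exists (aut_act g c2); first exact: aut_mem.
  by rewrite -gc1 hdist_act hdistC.
have far : forall c, c \in C -> c != 0 -> (delta <= hdist c 0)%N.
  by move=> c cC cn0; apply: Hmin.
have dist2 : forall i j : 'I_m, i != j -> dist_to C (rowij i j) 2.
  move=> i j ij; split; first by exists 0 => //; rewrite rowij_wt.
  move=> c cC; case: (eqVneq c 0) => [->|cn0]; first by rewrite rowij_wt.
  have := far c cC cn0; have := hdist_tri c (rowij i j) 0.
  rewrite rowij_wt // (hdistC c (rowij i j)); lia.
have [i [j [iS jS ij]]] : exists i j, [/\ i \in supp w0, j \in supp w0 & i != j].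
  by apply/card_gt1P; rewrite -hdist0 w0d; lia.
have cover : forall k l : 'I_m, k != l -> exists2 w, w \in C /\ hdist w 0 = delta &
    (w 0 k != 0) && (w 0 l != 0).
  move=> k l kl.
  have [[b s] gA ga] := CT 2%N _ _ (dist2 i j ij) (dist2 k l kl).
  have g0 : aut_act (b, s) 0 = b by rewrite /aut_act /= col_perm_const add0r.
  have b0 : b = 0.
    apply/eqP; apply/negPn/negP => bn0.
    have bC : b \in C by rewrite -g0; exact: aut_mem.
    have := far b bC bn0; have := hdist_tri b (rowij k l) 0.
    have e : hdist b (rowij k l) = 2%N.
      rewrite -ga -{1}g0 hdist_act hdistC rowij_wt //.
    rewrite e rowij_wt // => h1 h2.
    by have := leq_trans h2 h1; rewrite leqNgt d5.
  exists (aut_act (b, s) w0); first split.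
  - exact: aut_mem.
  - have g0' : aut_act (b, s) 0 = 0 by rewrite g0 b0.
    by rewrite -[X in hdist _ X]g0' hdist_act.
  have key : forall t, t \in [:: k; l] -> aut_act (b, s) w0 0 t != 0.
    move=> t tkl; rewrite act_entry b0 /= [X in _ + X]mxE addr0 /=.
    have : rowij k l 0 t != 0 by rewrite rowij_nz; move: tkl; rewrite !inE.
    rewrite -ga act_entry b0 /= [X in _ + X]mxE addr0 rowij_nz /=.
    by case/orP => /eqP ->; [move: iS | move: jS]; rewrite inE.
  by rewrite !key // !inE eqxx ?orbT.
set W := [set w in C | hdist w 0 == delta].
have H1 : (m * (m - 1) <= #|W| * (delta * (delta - 1)))%N.
  have -> : (m * (m - 1))%N = #|offdiag [set: 'I_m]|.
    by rewrite card_offdiag cardsT card_ord.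
  apply: (@leq_trans #|\bigcup_(w in W) offdiag (supp w)|).
    apply: subset_leq_card; apply/subsetP => -[k l]; rewrite !inE /= => kl.
    have [w [wC wd] /andP [wk wl]] := cover k l kl.
    apply/bigcupP; exists w; first by rewrite inE wC wd eqxx.
    by rewrite !inE wk wl kl.
  apply: leq_trans (card_bigcup_le _ _) _.
  rewrite -sum_nat_const; apply: leq_sum => w; rewrite inE => /andP [_ /eqP wd].
  by rewrite card_offdiag -hdist0 wd.
have H2 : (#|W| * #|vs_set Cmax| <= #|C|)%N.
  rewrite -cardsX.
  have <- : #|[set p.1 + p.2 | p in setX W (vs_set Cmax)]| = #|setX W (vs_set Cmax)|.
    apply: card_in_imset => -[u d] [u' d'] /=; rewrite !inE /= ?vs_setE.
    move=> /andP [/andP [uC /eqP ud] dC] /andP [/andP [u'C /eqP u'd] d'C] H.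
    have uu : u = u'.
      apply/eqP; apply/negPn/negP => nu.
      have dm : u - u' \in Cmax.
        have -> : u = u' + d' - d by rewrite -H addrK.
        rewrite addrAC (addrC u') addrK; exact: memvB.
      have := Hmax (u - u') 0; rewrite ?vs_setE dm mem0v subr_eq0 => /(_ isT isT nu).
      have -> : hdist (u - u') 0 = hdist u u'.
        by apply: eq_card => t; rewrite !inE !mxE subr_eq0.
      have := hdist_tri u 0 u'; rewrite ud (hdistC 0 u') u'd => h1 h2.
      by have := leq_trans h2 h1; rewrite leqNgt addnn -mul2n Hlt.
    by move: H; rewrite uu => /addrI ->.
  apply: subset_leq_card; apply/subsetP => x /imsetP [[u d]].
  rewrite !inE /= ?vs_setE => /andP [/andP [uC _] dC] ->.
  by have := aut_mem (TA d dC) uC; rewrite /aut_act col_perm1.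
have Cm0 : (0 < #|vs_set Cmax|)%N by apply/card_gt0P; exists 0; rewrite vs_setE mem0v.
have dd0 : (0 < delta * (delta - 1))%N.
  by rewrite muln_gt0 subn_gt0; apply/andP; split; apply: leq_trans d5.
have Cm0R : (0 < #|vs_set Cmax|%:R :> rat) by rewrite ltr0n.
have dd0R : (0 < (delta * (delta - 1))%:R :> rat) by rewrite ltr0n.
move: Hrat; rewrite (ltr_pdivrMr _ _ Cm0R) mulrAC (ltr_pdivlMr _ _ dd0R) -!natrM ltr_nat.
move=> H3.
have h4 : (m * (m - 1) * #|vs_set Cmax| <= #|C| * (delta * (delta - 1)))%N.
  apply: leq_trans (leq_mul H1 (leqnn #|vs_set Cmax|)) _.
  by rewrite mulnAC leq_mul2r H2 orbT.
by move: (leq_ltn_trans h4 H3); rewrite ltnn.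
Qed.
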